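(* Let $\{A_{k,n}:0\le k\le n,\ n\in\mathbb N\}$ be a triangular array of complex random variables satisfying Assumptions 1* and 2*. Then almost surely: $\lim_{n\to\infty}|A_{n,n}|^{1/n}=1$; for each fixed $k\ge0$, $\lim_{n\to\infty}|A_{k,n}|^{1/n}=1$; and $\lim_{n\to\infty}\max_{0\le k\le n}|A_{k,n}|^{1/n}=1$.
   Context: $F_{k,n}(x)=\mathbb P(|A_{k,n}|\le x)$. Assumption 1*: there is $N\in\mathbb N$ such that for each $n\ge N$ the random variables $|A_{0,n}|,\dots,|A_{n,n}|$ are jointly independent; and there are $a>1$ and a function $f:[a,\infty)\to[0,1]$ such that $f(x)\log x$ is decreasing, $\int_a^\infty f(x)\frac{\log x}{x}\,dx<\infty$, and $1-F_{k,n}(x)\le f(x)$ for all $x\ge a$, all $0\le k\le n$, all $n\ge N$. Assumption 2*: there are $N\in\mathbb N$, $0<b<1$ and an increasing $g:[0,b]\to[0,1]$ with $\int_0^bg(x)\,dx/x<\infty$ and $F_{k,n}(x)\le g(x)$ for all $x\in[0,b]$, $0\le k\le n$, $n\ge N$. *)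

(* Defs.v *)
From HB Require Import structures.
From mathcomp Require Import all_boot all_order all_algebra.
From mathcomp Require Import all_classical all_reals all_analysis.
Set Implicit Arguments. Unset Strict Implicit. Unset Printing Implicit Defensive.
Import Order.TTheory GRing.Theory Num.Theory.
Import numFieldNormedType.Exports.
Local Open Scope classical_set_scope.
Local Open Scope ring_scope.

Definition cmod {R : realType} (x y : R) : R := Num.sqrt (x ^+ 2 + y ^+ 2).

Definition mutually_independent {R : realType} {d : measure_display}
  {T : measurableType d} (P : probability T R) (m : nat)
  (X : 'I_m -> T -> R) : Prop :=
  forall B : 'I_m -> set R, (forall i, measurable (B i)) ->
    P (\bigcap_(i in [set: 'I_m]) (X i @^-1` B i)) =
    (\prod_(i < m) P (X i @^-1` B i))%E.

(* Main.v *)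
Require Import Defs.
From HB Require Import structures.
From mathcomp Require Import all_boot all_order all_algebra.
From mathcomp Require Import all_classical all_reals all_analysis.
From mathcomp Require Import measurable_realfun.
Import Order.TTheory GRing.Theory Num.Theory.
Import numFieldNormedType.Exports.
Local Open Scope classical_set_scope.
Local Open Scope ring_scope.
From mathcomp Require Import ring lra.

Lemma nneseries_bounded (R : realType) (u : nat -> \bar R) (B : \bar R) :
  (forall n, (0 <= u n)%E) -> (forall M, (\sum_(0 <= n < M) u n <= B)%E) ->
  (\sum_(n <oo) u n <= B)%E.
Proof.
move=> u0 uB; apply: lime_le.
  by apply: is_cvg_nneseries => n _ _; exact: u0.
by apply: nearW => M; exact: uB.
Qed.

Lemma bc_ae (R : realType) (d : measure_display) (T : measurableType d)
  (P : probability T R) (F : nat -> set T) :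
  (forall n, measurable (F n)) -> (\sum_(n <oo) P (F n) < +oo)%E ->
  {ae P, forall w, exists n0, forall n, (n0 <= n)%N -> ~ F n w}.
Proof.
move=> mF Hs; exists (lim_sup_set F); split.
- by apply: bigcapT_measurable => n; apply: bigcup_measurable => k _; exact: mF.
- exact: lim_sup_set_cvg0.
- move=> w /= Hw n _; apply: contrapT => Hn; apply: Hw; exists n => k nk Fk.
  by apply: Hn; exists k.
Qed.

Lemma sum_int_bound (R : realType) (h : R -> R) (D : set R) (F : nat -> set R)
  (c : nat -> R) (K : R) :
  measurable D -> measurable_fun D (EFin \o h) ->
  (forall x, D x -> 0 <= h x) -> 0 <= K ->
  (forall n, measurable (F n)) -> trivIset setT F -> (forall n, F n `<=` D) ->
  (forall n, 0 <= c n) ->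
  (forall n, ((c n)%:E <= K%:E * \int[lebesgue_measure]_(x in F n) (h x)%:E)%E) ->
  (\sum_(n <oo) (c n)%:E <= K%:E * \int[lebesgue_measure]_(x in D) (h x)%:E)%E.
Proof.
move=> mD mh h0 K0 mF tF FD c0 cK.
apply: nneseries_bounded => [n|M]; first by rewrite lee_fin.
apply: (@le_trans _ _ (\sum_(0 <= n < M) (K%:E * \int[lebesgue_measure]_(x in F n) (h x)%:E))%E).
  by apply: lee_sum => n _; exact: cK.
rewrite -ge0_sume_distrr; last first.
  by move=> n _; apply: integral_ge0 => x Fx; rewrite lee_fin; apply: h0; exact: (FD n).
have UD : \big[setU/set0]_(i <- index_iota 0 M) F i `<=` D.
  elim: (index_iota 0 M) => [|i s IH]; first by rewrite big_nil.
  by rewrite big_cons subUset; split => //; exact: (FD i).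
rewrite -ge0_integral_bigsetU //.
all: try (by apply: bigsetU_measurable => i _; exact: mF).
all: try exact: iota_uniq.
all: try (by apply: sub_trivIset tF).
all: try (exact: measurable_funS mh).
all: try (by move=> x Ux; rewrite lee_fin; apply: h0; exact: UD).
apply: lee_wpmul2l; first by rewrite lee_fin.
apply: ge0_subset_integral => //.
all: try (by apply: bigsetU_measurable => i _; exact: mF).
Qed.

Lemma int_itv_lb (R : realType) (h : R -> R) (D : set R) (t e v : R) :
  measurable D -> measurable_fun D (EFin \o h) -> 0 <= v -> 0 < e ->
  `[expR (t - e), expR t[%classic `<=` D ->
  (forall x, expR (t - e) <= x < expR t -> v <= h x) ->
  ((v * (expR t * (1 - expR (- e))))%:E <=
     \int[lebesgue_measure]_(x in `[expR (t - e), expR t[%classic) (h x)%:E)%E.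
Proof.
move=> mD mh v0 e0 ID hv.
have lt : expR (t - e) < expR t by rewrite ltr_expR ltrBlDr ltrDl.
apply: (@le_trans _ _ (\int[lebesgue_measure]_(x in `[expR (t - e), expR t[%classic) (cst v%:E) x)%E).
  rewrite integral_cst //= lebesgue_measure_itv /= lte_fin lt /=.
  by rewrite -EFinD -EFinM lee_fin expRD mulrBr mulr1.
apply: ge0_le_integral => //.
- exact: measurable_funS mh.
Qed.

Lemma meas_inv_pos (R : realType) : measurable_fun (`]0, +oo[%classic : set R) (@GRing.inv R).
Proof.
apply: open_continuous_measurable_fun; first exact: interval_open.
move=> x; rewrite inE /= in_itv /= andbT => x0.
by apply: inv_continuous; rewrite gt_eqF.
Qed.

Lemma meas_h_up (R : realType) (f : R -> R) (a : R) : 1 < a ->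
  (forall x y, a <= x -> x <= y -> f y * ln y <= f x * ln x) ->
  measurable_fun (`[a, +oo[%classic : set R) (EFin \o (fun x => f x * ln x / x)).
Proof.
move=> Ha Hfdec; apply/measurable_EFinP.
pose phi x := f (Num.max x a) * ln (Num.max x a).
have mphi : measurable_fun `[a, +oo[%classic phi.
  apply: nonincreasing_measurable => // x y xy; rewrite /phi.
  apply: Hfdec; first by rewrite le_max lexx orbT.
  by rewrite ge_max !le_max xy lexx !orbT.
have minv : measurable_fun `[a, +oo[%classic (@GRing.inv R).
  apply: measurable_funS (meas_inv_pos R) => //.
  by move=> x /=; rewrite !in_itv /= !andbT => ax; apply: lt_le_trans ax; apply: lt_trans Ha.
apply: eq_measurable_fun (measurable_funM mphi minv).
move=> x; rewrite inE /= in_itv /= andbT => ax.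
by rewrite /phi /= max_l.
Qed.

Lemma meas_h_low (R : realType) (g : R -> R) (b : R) : 0 < b ->
  (forall x y : R, 0 <= x -> x <= y -> y <= b -> g x <= g y) ->
  measurable_fun (`[0, b]%classic : set R) (EFin \o (fun x => g x / x)).
Proof.
move=> b0 Hginc; apply/measurable_EFinP.
have -> : `[0, b]%classic = [set 0] `|` `]0, b]%classic.
  apply/seteqP; split => x /=.
    rewrite in_itv /= => /andP[]; rewrite le_eqVlt => /orP[/eqP <-|x0 xb]; first by left.
    by right; rewrite in_itv /= x0 xb.
  by case=> [->|]; rewrite !in_itv /= ?lexx ?(ltW b0)// => /andP[/ltW -> ->].
apply/measurable_funU => //; split; first exact: measurable_fun_set1.
pose psi x := g (Num.min (Num.max x 0) b).
have mpsi : measurable_fun `]0, b]%classic psi.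
  apply: nondecreasing_measurable => // x y xy; rewrite /psi.
  apply: Hginc.
  - by rewrite le_min le_max lexx orbT (ltW b0).
  - by rewrite le_min !ge_min lexx !orbT andbT ge_max !le_max xy lexx !orbT.
  - by rewrite ge_min lexx orbT.
have minv : measurable_fun `]0, b]%classic (@GRing.inv R).
  apply: measurable_funS (meas_inv_pos R) => //.
  by move=> x /=; rewrite !in_itv /= andbT => /andP[].
apply: eq_measurable_fun (measurable_funM mpsi minv).
move=> x; rewrite inE /= in_itv /= => /andP[x0 xb].
by rewrite /psi /= max_l ?(ltW x0)// min_l.
Qed.

Lemma itv_disj (R : realType) (s s' e x : R) :
  s <= s' - e -> expR (s' - e) <= x -> x < expR s -> False.
Proof.
move=> ss' h1 h2.
have h3 : expR s <= expR (s' - e) by rewrite ler_expR.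
by have := lt_le_trans h2 (le_trans h3 h1); rewrite ltxx.
Qed.

Lemma fin_lt (R : realType) (K : R) (y : \bar R) : (0 <= y)%E -> (y < +oo)%E ->
  (K%:E * y < +oo)%E.
Proof.
move=> y0 yoo; have yf : y \is a fin_num by rewrite ge0_fin_numE.
by rewrite -(fineK yf) -EFinM ltry.
Qed.

Lemma upper_sum (R : realType) (f : R -> R) (a eps : R) (M : nat) :
  1 < a -> (forall x, a <= x -> 0 <= f x <= 1) ->
  (forall x y, a <= x -> x <= y -> f y * ln y <= f x * ln x) ->
  (\int[lebesgue_measure]_(x in `[a, +oo[%classic) (f x * ln x / x)%:E < +oo)%E ->
  0 < eps -> a <= expR (eps * M%:R) ->
  (\sum_(n <oo) ((if (M < n)%N then n.+1%:R * f (expR (eps * n%:R)) else 0)%:E) < +oo)%E.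
Proof.
move=> Ha Hf01 Hfdec Hfint e0 HM.
have q1 : expR (- eps) < 1 by rewrite expR_lt1 oppr_lt0.
pose K := 2 / (eps * (1 - expR (- eps))).
have K0 : 0 <= K by rewrite divr_ge0 // mulr_ge0 // ?(ltW e0) // subr_ge0 ltW.
pose t (n : nat) := eps * n%:R.
pose F (n : nat) : set R := if (M < n)%N then `[expR (t n - eps), expR (t n)[%classic else set0.
have a0 : 0 < a by apply: lt_trans Ha.
have h0 : forall x, `[a, +oo[%classic x -> 0 <= f x * ln x / x.
  move=> x /=; rewrite in_itv /= andbT => ax.
  have /andP[fx0 _] := Hf01 x ax.
  rewrite divr_ge0 // ?mulr_ge0 // ?ln_ge0 //; first by rewrite (le_trans (ltW Ha)).
  exact: le_trans (ltW a0) ax.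
have FD : forall n, F n `<=` `[a, +oo[%classic.
  move=> n x; rewrite /F; case: ifP => // Mn /=; rewrite !in_itv /= andbT => /andP[hx _].
  apply: le_trans HM _; apply: le_trans hx; rewrite ler_expR /t.
  have : M%:R + 1 <= n%:R :> R by rewrite natr1 ler_nat.
  by move=> Mn'; nra.
apply: le_lt_trans (@sum_int_bound R (fun x => f x * ln x / x) _ F _ K _ _ h0 K0 _ _ FD _ _) _.
- exact: measurable_itv.
- exact: meas_h_up.
- by move=> n; rewrite /F; case: ifP => _; [exact: measurable_itv|exact: measurable0].
- move=> i j _ _ [x [Fi Fj]]; move: Fi Fj; rewrite /F.
  case: ifP => // _; case: ifP => // _ /=; rewrite !in_itv /= => /andP[i1 i2] /andP[j1 j2].
  case: (ltngtP i j) => // ij; exfalso.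
  + apply: (@itv_disj R (t i) (t j) eps x _ j1 i2); rewrite /t.
    have : i%:R + 1 <= j%:R :> R by rewrite natr1 ler_nat.
    by move=> ?; nra.
  + apply: (@itv_disj R (t j) (t i) eps x _ i1 j2); rewrite /t.
    have : j%:R + 1 <= i%:R :> R by rewrite natr1 ler_nat.
    by move=> ?; nra.
- move=> n; case: ifP => // Mn; apply: mulr_ge0 => //.
  suff /Hf01/andP[] : a <= expR (eps * n%:R) by [].
  apply: le_trans HM _; rewrite ler_expR ler_pM2l // ler_nat; exact: ltnW.
- move=> n; rewrite /F; case: ifP => Mn; last by rewrite integral_set0 mule0.
  set xn := expR (eps * n%:R).
  have xn0 : 0 < xn by exact: expR_gt0.
  have axn : a <= xn.
    apply: le_trans HM _; rewrite ler_expR ler_pM2l // ler_nat; exact: ltnW.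
  have /andP[fxn _] := Hf01 _ axn.
  pose v := f xn * (eps * n%:R) / xn.
  have v0 : 0 <= v by rewrite /v divr_ge0 ?(ltW xn0) // mulr_ge0 // mulr_ge0 // ltW.
  have ID : `[expR (t n - eps), expR (t n)[%classic `<=` `[a, +oo[%classic.
    by move=> x hx; apply: (FD n); rewrite /F Mn.
  have hv : forall x, expR (t n - eps) <= x < expR (t n) -> v <= f x * ln x / x.
    move=> x hx.
    have ax : a <= x by have := ID x; rewrite /= !in_itv /= andbT; apply.
    have x0 : 0 < x by exact: lt_le_trans a0 ax.
    have xxn : x <= xn by move: hx => /andP[_ /ltW].
    have /andP[fx0 _] := Hf01 _ ax.
    have B0 : 0 <= f x * ln x by rewrite mulr_ge0 // ln_ge0 // (le_trans (ltW Ha)).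
    apply: (@le_trans _ _ (f x * ln x / xn)).
      rewrite /v -[X in f xn * X]expRK; apply: ler_wpM2r; first by rewrite invr_ge0 ltW.
      exact: Hfdec.
    by rewrite ler_wpM2l // lef_pV2 // posrE.
  have Hint := @int_itv_lb R (fun x => f x * ln x / x) _ (t n) eps v
    (measurable_itv _) (@meas_h_up R f a Ha Hfdec) v0 e0 ID hv.
  apply: le_trans (lee_wpmul2l _ Hint); last by rewrite lee_fin.
  rewrite -EFinM lee_fin.
  have -> : K * (v * (expR (t n) * (1 - expR (- eps)))) = 2 * n%:R * f xn.
    rewrite /K /v /t -/xn; field.
    by rewrite (gt_eqF xn0) subr_eq0 [1 == _]eq_sym (lt_eqF q1) (gt_eqF e0).
  have n1 : 1 <= n%:R :> R by rewrite ler1n; exact: leq_ltn_trans Mn.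
  rewrite -natr1; nra.
- apply: fin_lt; first by apply: integral_ge0 => x /h0; rewrite lee_fin.
  exact: Hfint.
Qed.

Lemma lower_sum (R : realType) (g : R -> R) (b eps : R) (M : nat) :
  0 < b -> (forall x : R, 0 <= x <= b -> 0 <= g x <= 1) ->
  (forall x y : R, 0 <= x -> x <= y -> y <= b -> g x <= g y) ->
  (\int[lebesgue_measure]_(x in `[0%R, b]%classic) (g x / x)%:E < +oo)%E ->
  0 < eps -> expR (- (eps * M%:R)) <= b ->
  (\sum_(n <oo) ((if (M < n)%N then g (expR (- (eps * n%:R))) else 0)%:E) < +oo)%E.
Proof.
move=> b0 Hg01 Hginc Hgint e0 HM.
have q1 : expR (- eps) < 1 by rewrite expR_lt1 oppr_lt0.
pose K := 1 / (1 - expR (- eps)).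
have K0 : 0 <= K by rewrite divr_ge0 // subr_ge0 ltW.
pose t (n : nat) := eps - eps * n%:R.
have tE : forall n, t n - eps = - (eps * n%:R) by move=> n; rewrite /t; ring.
have tM : forall n, (M < n)%N -> t n <= - (eps * M%:R).
  move=> n Mn; have : M%:R + 1 <= n%:R :> R by rewrite natr1 ler_nat.
  by move=> ?; rewrite /t; nra.
have tb : forall n, (M < n)%N -> expR (t n) <= b.
  by move=> n Mn; apply: le_trans HM; rewrite ler_expR tM.
pose F (n : nat) : set R := if (M < n)%N then `[expR (t n - eps), expR (t n)[%classic else set0.
have h0 : forall x, `[0, b]%classic x -> 0 <= g x / x.
  move=> x /=; rewrite in_itv /= => /andP[x0 xb].
  have /andP[gx0 _] := Hg01 x (introT andP (conj x0 xb)).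
  by rewrite divr_ge0.
have FD : forall n, F n `<=` `[0, b]%classic.
  move=> n x; rewrite /F; case: ifP => // Mn /=; rewrite !in_itv /= => /andP[hx1 hx2].
  apply/andP; split; first by apply: le_trans hx1; exact: ltW (expR_gt0 _).
  exact: le_trans (ltW hx2) (tb n Mn).
apply: le_lt_trans (@sum_int_bound R (fun x => g x / x) _ F _ K _ _ h0 K0 _ _ FD _ _) _.
- exact: measurable_itv.
- exact: meas_h_low.
- by move=> n; rewrite /F; case: ifP => _; [exact: measurable_itv|exact: measurable0].
- move=> i j _ _ [x [Fi Fj]]; move: Fi Fj; rewrite /F.
  case: ifP => // _; case: ifP => // _ /=; rewrite !in_itv /= => /andP[i1 i2] /andP[j1 j2].
  case: (ltngtP i j) => // ij; exfalso.
  + apply: (@itv_disj R (t j) (t i) eps x _ i1 j2); rewrite /t.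
    have : i%:R + 1 <= j%:R :> R by rewrite natr1 ler_nat.
    by move=> ?; nra.
  + apply: (@itv_disj R (t i) (t j) eps x _ j1 i2); rewrite /t.
    have : j%:R + 1 <= i%:R :> R by rewrite natr1 ler_nat.
    by move=> ?; nra.
- move=> n; case: ifP => // Mn.
  suff /Hg01/andP[] : 0 <= expR (- (eps * n%:R)) <= b by [].
  rewrite (ltW (expR_gt0 _)) /= -tE; apply: le_trans (tb n Mn).
  by rewrite ler_expR lerBlDr lerDl ltW.
- move=> n; rewrite /F; case: ifP => Mn; last by rewrite integral_set0 mule0.
  set yn := expR (- (eps * n%:R)).
  set E := expR (t n).
  have E0 : 0 < E by exact: expR_gt0.
  have yn0 : 0 < yn by exact: expR_gt0.
  have ynb : yn <= b.
    apply: le_trans (tb n Mn); rewrite /yn -tE ler_expR lerBlDr lerDl ltW //.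
  have /andP[gyn _] := Hg01 yn (introT andP (conj (ltW yn0) ynb)).
  pose v := g yn / E.
  have v0 : 0 <= v by rewrite /v divr_ge0 // ltW.
  have ID : `[expR (t n - eps), expR (t n)[%classic `<=` `[0, b]%classic.
    by move=> x hx; apply: (FD n); rewrite /F Mn.
  have hv : forall x, expR (t n - eps) <= x < expR (t n) -> v <= g x / x.
    move=> x; rewrite tE -/yn -/E => /andP[yx xE].
    have x0 : 0 < x by exact: lt_le_trans yn0 yx.
    have xb : x <= b by apply: le_trans (ltW xE) (tb n Mn).
    have /andP[gx0 _] := Hg01 x (introT andP (conj (ltW x0) xb)).
    apply: (@le_trans _ _ (g x / E)).
      by apply: ler_wpM2r; [rewrite invr_ge0 ltW|apply: Hginc => //; exact: ltW].
    by rewrite ler_wpM2l // lef_pV2 ?posrE // ltW.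
  have Hint := @int_itv_lb R (fun x => g x / x) _ (t n) eps v
    (measurable_itv _) (@meas_h_low R g b b0 Hginc) v0 e0 ID hv.
  apply: le_trans (lee_wpmul2l _ Hint); last by rewrite lee_fin.
  rewrite -EFinM lee_fin -/E.
  have -> : K * (v * (E * (1 - expR (- eps)))) = g yn.
    rewrite /K /v; field.
    by rewrite (gt_eqF E0) subr_eq0 [1 == _]eq_sym (lt_eqF q1).
  by [].
- apply: fin_lt; first by apply: integral_ge0 => x /h0; rewrite lee_fin.
  exact: Hgint.
Qed.

Definition ep (R : realType) (m : nat) : R := (m.+2%:R)^-1.

Lemma expR_le_inv (R : realType) (e : R) : 0 <= e < 1 -> expR e <= (1 - e)^-1.
Proof.
move=> /andP[e0 e1].
have h : 1 - e <= expR (- e) by have := expR_ge1Dx (- e).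
rewrite -[expR e]invrK -expRN lef_pV2 ?posrE ?expR_gt0 //.
by rewrite subr_gt0.
Qed.

Lemma ep_gt0 (R : realType) m : 0 < ep R m.
Proof. by rewrite /ep invr_gt0 ltr0n. Qed.

Lemma sandwich (R : realType) (u : nat -> R) :
  (forall m, exists n0, forall n, (n0 <= n)%N -> expR (- ep R m) <= u n <= expR (ep R m)) ->
  u @ \oo --> (1 : R).
Proof.
move=> H; apply/cvgrPdist_lt => δ δ0.
pose m := Num.Def.archi_bound (δ^-1).
have hm : δ^-1 < m%:R by apply: archi_boundP; rewrite invr_ge0 ltW.
have hm1 : (m.+1%:R)^-1 < δ.
  rewrite invf_plt ?posrE ?ltr0n //; apply: lt_le_trans hm _.
  by rewrite ler_nat.
have [n0 Hn0] := H m.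
exists n0 => // n /= /Hn0 /andP[l uu].
have epm : ep R m < (m.+1%:R)^-1.
  by rewrite /ep ltf_pV2 ?posrE ?ltr0n // ltr_nat.
have ep1 : ep R m < 1.
  by rewrite /ep invf_plt ?posrE ?ltr0n // invr1 ltr1n.
have e0 := ep_gt0 R m.
have U : expR (ep R m) <= 1 + (m.+1%:R)^-1.
  apply: (le_trans (@expR_le_inv R (ep R m) _)); first by rewrite (ltW e0) ep1.
  rewrite /ep le_eqVlt; apply/orP; left; apply/eqP.
  rewrite -[m.+2%:R]natr1; field.
  have hm0 := ler0n R m.
  by apply/andP; split; apply/eqP => Hc; lra.
have L : 1 - ep R m <= expR (- ep R m) by have := expR_ge1Dx (- ep R m).
rewrite ltr_distlC; apply/andP; split.
  apply: (lt_le_trans _ l); apply: (lt_le_trans _ L).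
  by rewrite ltrD2l ltrN2; apply: lt_trans epm hm1.
by apply: (le_lt_trans uu); apply: (le_lt_trans U); rewrite ltrD2l.
Qed.

Lemma pow_upper (R : realType) (x e : R) (n : nat) : (0 < n)%N -> 0 <= e ->
  0 <= x -> x <= expR (e * n%:R) -> x `^ (n%:R^-1) <= expR e.
Proof.
move=> n0 e0 x0 xe; rewrite /powR; case: ifP => [_|xn0].
  by rewrite invr_eq0 pnatr_eq0 gtn_eqF // ltW // expR_gt0.
have xp : 0 < x by rewrite lt_neqAle eq_sym xn0.
rewrite ler_expR mulrC ler_pdivrMr ?ltr0n //.
by rewrite -ler_expR lnK // posrE.
Qed.

Lemma pow_lower (R : realType) (x e : R) (n : nat) : (0 < n)%N ->
  expR (- (e * n%:R)) < x -> expR (- e) <= x `^ (n%:R^-1).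
Proof.
move=> n0 xe.
have xp : 0 < x by apply: lt_trans xe; exact: expR_gt0.
rewrite /powR gt_eqF // ler_expR mulrC ler_pdivlMr ?ltr0n //.
rewrite -ler_expR lnK ?posrE // mulNr; exact: ltW.
Qed.

Lemma det (R : realType) (A : nat -> nat -> R) :
  (forall k n, 0 <= A k n) ->
  (forall m, exists n0, forall n, (n0 <= n)%N -> forall k, (k <= n)%N ->
     A k n <= expR (ep R m * n%:R)) ->
  (forall m k, exists n0, forall n, (n0 <= n)%N -> expR (- (ep R m * n%:R)) < A k n) ->
  (forall m, exists n0, forall n, (n0 <= n)%N -> expR (- (ep R m * n%:R)) < A n n) ->
  [/\ (fun n : nat => A n n `^ (n%:R^-1)) @ \oo --> (1 : R),
      forall k : nat, (fun n : nat => A k n `^ (n%:R^-1)) @ \oo --> (1 : R)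
    & (fun n : nat => \big[Num.max/0]_(k < n.+1) A k n `^ (n%:R^-1)) @ \oo --> (1 : R)].
Proof.
move=> A0 H1 H2 H3; split.
- apply: sandwich => m; have [n1 h1] := H1 m; have [n3 h3] := H3 m.
  exists (maxn (maxn n1 n3) 1) => n; rewrite !geq_max => /andP[/andP[n1n n3n] n0].
  apply/andP; split; first by apply: pow_lower => //; exact: h3.
  by apply: pow_upper => //; [exact: ltW (ep_gt0 R m)|exact: h1].
- move=> k; apply: sandwich => m; have [n1 h1] := H1 m; have [n2 h2] := H2 m k.
  exists (maxn (maxn n1 n2) (maxn k 1)) => n.
  rewrite !geq_max => /andP[/andP[n1n n2n] /andP[kn n0]].
  apply/andP; split; first by apply: pow_lower => //; exact: h2.
  by apply: pow_upper => //; [exact: ltW (ep_gt0 R m)|exact: h1].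
- apply: sandwich => m; have [n1 h1] := H1 m; have [n3 h3] := H3 m.
  exists (maxn (maxn n1 n3) 1) => n; rewrite !geq_max => /andP[/andP[n1n n3n] n0].
  apply/andP; split.
    apply: (le_trans (@pow_lower R _ _ _ n0 (h3 n n3n))).
    exact: (le_bigmax _ (fun k : 'I_n.+1 => A k n `^ (n%:R^-1)) ord_max).
  apply: bigmax_le => [|k _]; first exact: ltW (expR_gt0 _).
  apply: pow_upper => //; first exact: ltW (ep_gt0 R m).
  by apply: h1 => //; rewrite -ltnS.
Qed.

Lemma exists_M (R : realType) (a b eps : R) (N : nat) : 0 < b -> 0 < eps ->
  exists M : nat, [/\ (N <= M)%N, a <= expR (eps * M%:R) & expR (- (eps * M%:R)) <= b].
Proof.
move=> b0 e0.
pose c := Num.max a (b^-1).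
have bc : b^-1 <= c by rewrite le_max lexx orbT.
have ac : a <= c by rewrite le_max lexx.
have c0 : 0 < c by apply: lt_le_trans bc; rewrite invr_gt0.
pose z := c / eps.
have z0 : 0 <= z by rewrite divr_ge0 // ltW.
pose M := maxn N (Num.Def.archi_bound z).
have hz : z < M%:R.
  apply: lt_le_trans (archi_boundP z0) _; rewrite ler_nat leq_maxr //.
have ceM : c < eps * M%:R.
  by rewrite -ltr_pdivrMl // mulrC.
have eM : eps * M%:R < expR (eps * M%:R).
  by apply: lt_le_trans (expR_ge1Dx _); rewrite ltrDr ltr01.
exists M; split.
- exact: leq_maxl.
- by apply: ltW; apply: le_lt_trans ac (lt_trans ceM eM).
- rewrite expRN -[b]invrK lef_pV2 ?posrE ?invr_gt0 ?expR_gt0 //.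
  by apply: ltW; apply: le_lt_trans bc (lt_trans ceM eM).
Qed.

Lemma mle (R : realType) (d : measure_display) (T : measurableType d) (X : T -> R) (x : R) :
  measurable_fun setT X -> measurable [set w | X w <= x].
Proof.
move=> mX; have := measurable_fun_le measurableT mX (measurable_cst x).
by rewrite setTI.
Qed.

Lemma upper_ae (R : realType) (d : measure_display) (T : measurableType d)
  (P : probability T R) (A : nat -> nat -> T -> R)
  (mA : forall k n, measurable_fun setT (A k n))
  (N1 : nat) (a : R) (f : R -> R) (Ha : 1 < a)
  (Hf01 : forall x, a <= x -> 0 <= f x <= 1)
  (Hfdec : forall x y, a <= x -> x <= y -> f y * ln y <= f x * ln x)
  (Hfint : (\int[lebesgue_measure]_(x in `[a, +oo[%classic)
              (f x * ln x / x)%:E < +oo)%E)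
  (Htail : forall n k x, (N1 <= n)%N -> (k <= n)%N -> a <= x ->
     (1 - P [set w | (A k n w <= x)%R] <= (f x)%:E)%E)
  (eps : R) : 0 < eps ->
  {ae P, forall w, exists n0, forall n, (n0 <= n)%N -> forall k, (k <= n)%N ->
     A k n w <= expR (eps * n%:R)}.
Proof.
move=> e0.
have [M [N1M aM _]] := @exists_M R a 1 eps N1 ltr01 e0.
pose B (n : nat) (k : nat) := [set w | expR (eps * n%:R) < A k n w].
have mB : forall n k, measurable (B n k).
  move=> n k; rewrite /B (_ : [set w | _ < _] = ~` [set w | A k n w <= expR (eps * n%:R)]).
    by apply: measurableC; exact: mle.
  by apply/seteqP; split => w /=; rewrite ltNge => /negP.
pose E (n : nat) := if (M < n)%N then \big[setU/set0]_(k < n.+1) B n k else set0.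
have mE : forall n, measurable (E n).
  move=> n; rewrite /E; case: ifP => _ //.
  by apply: bigsetU_measurable => k _; exact: mB.
have PE : forall n, (P (E n) <= ((if (M < n)%N then n.+1%:R * f (expR (eps * n%:R)) else 0)%:E))%E.
  move=> n; rewrite /E; case: ifP => Mn; last by rewrite measure0.
  have axn : a <= expR (eps * n%:R).
    apply: le_trans aM _; rewrite ler_expR ler_pM2l // ler_nat; exact: ltnW.
  apply: le_trans (@content_subadditive _ _ _ P (\big[setU/set0]_(k < n.+1) B n k) (B n) n.+1 _ _ _) _.
  - by move=> k _; exact: mB.
  - by apply: bigsetU_measurable => k _; exact: mB.
  - by [].
  apply: le_trans (_ : \sum_(k < n.+1) (f (expR (eps * n%:R)))%:E <= _)%E.
    apply: lee_sum => k _.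
    have -> : B n k = ~` [set w | A k n w <= expR (eps * n%:R)].
      by rewrite /B; apply/seteqP; split => w /=; rewrite ltNge => /negP.
    have Hc := probability_setC P (@mle R d T (A k n) (expR (eps * n%:R)) (mA k n)).
    suff Hk : (P (~` [set w | (A k n w <= expR (eps * n%:R))%R]) <= (f (expR (eps * n%:R)))%:E)%E by exact: Hk.
    rewrite Hc.
    apply: Htail => //; first exact: leq_trans N1M (ltnW Mn).
    rewrite -ltnS; exact: ltn_ord k.
  by rewrite sumEFin sumr_const card_ord mulr_natl.
have Hs : (\sum_(n <oo) P (E n) < +oo)%E.
  apply: le_lt_trans (lee_nneseries (fun n _ _ => measure_ge0 P (E n)) (fun n _ => PE n)) _.
  exact: (@upper_sum R f a eps M Ha Hf01 Hfdec Hfint e0 aM).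
move: (@bc_ae R d T P E mE Hs); apply: filterS => w [n0 Hn0].
exists (maxn n0 M.+1) => n; rewrite geq_max => /andP[n0n Mn] k kn.
rewrite leNgt; apply/negP => Hk; apply: (Hn0 n n0n).
rewrite /E Mn -bigcup_mkord; exists k => //=.
Qed.

Lemma lower_ae (R : realType) (d : measure_display) (T : measurableType d)
  (P : probability T R) (A : nat -> nat -> T -> R)
  (mA : forall k n, measurable_fun setT (A k n))
  (N2 : nat) (b : R) (g : R -> R)
  (Hb : 0 < b < 1)
  (Hg01 : forall x : R, 0 <= x <= b -> 0 <= g x <= 1)
  (Hginc : forall x y : R, 0 <= x -> x <= y -> y <= b -> g x <= g y)
  (Hgint : (\int[lebesgue_measure]_(x in `[0%R, b]%classic)
              (g x / x)%:E < +oo)%E)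
  (Hsmall : forall n k (x : R), (N2 <= n)%N -> (k <= n)%N -> 0 <= x <= b ->
     (P [set w | (A k n w <= x)%R] <= (g x)%:E)%E)
  (kappa : nat -> nat) (M0 : nat) (Hk : forall n, (M0 <= n)%N -> (kappa n <= n)%N)
  (eps : R) : 0 < eps ->
  {ae P, forall w, exists n0, forall n, (n0 <= n)%N ->
     expR (- (eps * n%:R)) < A (kappa n) n w}.
Proof.
move=> e0; have /andP[b0 _] := Hb.
have [M [NM _ bM]] := @exists_M R 0 b eps (maxn N2 M0) b0 e0.
pose E (n : nat) := if (M < n)%N then [set w | A (kappa n) n w <= expR (- (eps * n%:R))] else set0.
have mE : forall n, measurable (E n).
  by move=> n; rewrite /E; case: ifP => _ //; exact: mle.
have PE : forall n, (P (E n) <= ((if (M < n)%N then g (expR (- (eps * n%:R))) else 0)%:E))%E.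
  move=> n; rewrite /E; case: ifP => Mn; last by rewrite measure0.
  have Mn' : (M <= n)%N by exact: ltnW.
  have := NM; rewrite geq_max => /andP[N2M M0M].
  apply: Hsmall.
  - exact: leq_trans N2M Mn'.
  - apply: Hk; exact: leq_trans M0M Mn'.
  - rewrite ltW ?expR_gt0 //=; apply: le_trans bM.
    by rewrite ler_expR lerN2 ler_pM2l // ler_nat.
have Hs : (\sum_(n <oo) P (E n) < +oo)%E.
  apply: le_lt_trans (lee_nneseries (fun n _ _ => measure_ge0 P (E n)) (fun n _ => PE n)) _.
  exact: (@lower_sum R g b eps M b0 Hg01 Hginc Hgint e0 bM).
move: (@bc_ae R d T P E mE Hs); apply: filterS => w [n0 Hn0].
exists (maxn n0 M.+1) => n; rewrite geq_max => /andP[n0n Mn].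
rewrite ltNge; apply/negP => Hkk; apply: (Hn0 n n0n).
by rewrite /E Mn.
Qed.

(* A k n = ReA k n + i ImA k n, for 0 <= k <= n. *)
Theorem lemma4p3 (R : realType) (d : measure_display) (T : measurableType d)
  (P : probability T R) (ReA ImA : nat -> nat -> {RV P >-> R})
  (* Assumption 1* *)
  (N1 : nat)
  (Hind : forall n, (N1 <= n)%N ->
     mutually_independent P
       (fun k : 'I_n.+1 => fun w => cmod (ReA k n w) (ImA k n w)))
  (a : R) (f : R -> R)
  (Ha : 1 < a)
  (Hf01 : forall x, a <= x -> 0 <= f x <= 1)
  (Hfdec : forall x y, a <= x -> x <= y -> f y * ln y <= f x * ln x)
  (Hfint : (\int[lebesgue_measure]_(x in `[a, +oo[%classic)
              (f x * ln x / x)%:E < +oo)%E)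
  (Htail : forall n k x, (N1 <= n)%N -> (k <= n)%N -> a <= x ->
     (1 - P [set w | (cmod (ReA k n w) (ImA k n w) <= x)%R] <= (f x)%:E)%E)
  (* Assumption 2* *)
  (N2 : nat) (b : R) (g : R -> R)
  (Hb : 0 < b < 1)
  (Hg01 : forall x : R, 0 <= x <= b -> 0 <= g x <= 1)
  (Hginc : forall x y : R, 0 <= x -> x <= y -> y <= b -> g x <= g y)
  (Hgint : (\int[lebesgue_measure]_(x in `[0%R, b]%classic)
              (g x / x)%:E < +oo)%E)
  (Hsmall : forall n k (x : R), (N2 <= n)%N -> (k <= n)%N -> 0 <= x <= b ->
     (P [set w | (cmod (ReA k n w) (ImA k n w) <= x)%R] <= (g x)%:E)%E) :
  {ae P, forall w,
     [/\ (fun n : nat => cmod (ReA n n w) (ImA n n w) `^ (n%:R^-1)) @ \oo --> (1 : R),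
         forall k : nat,
           (fun n : nat => cmod (ReA k n w) (ImA k n w) `^ (n%:R^-1)) @ \oo --> (1 : R)
       & (fun n : nat => \big[Num.max/0]_(k < n.+1)
              cmod (ReA k n w) (ImA k n w) `^ (n%:R^-1)) @ \oo --> (1 : R)]}.
Proof.
Proof.
pose A k n w := cmod (ReA k n w) (ImA k n w).
have mA : forall k n, measurable_fun setT (A k n).
  move=> k n; rewrite /A /cmod.
  apply: measurableT_comp; first exact: continuous_measurable_fun (@sqrt_continuous R).
  by apply: measurable_funD; apply: measurable_funX; exact: measurable_funPT.
have H1 : {ae P, forall w, forall m, exists n0, forall n, (n0 <= n)%N -> forall k, (k <= n)%N ->
     A k n w <= expR (ep R m * n%:R)}.
  apply: ae_foralln => m.
  exact: (@upper_ae R d T P A mA N1 a f Ha Hf01 Hfdec Hfint Htail _ (ep_gt0 R m)).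
have H2 : {ae P, forall w, forall m k, exists n0, forall n, (n0 <= n)%N ->
     expR (- (ep R m * n%:R)) < A k n w}.
  apply: ae_foralln => m; apply: ae_foralln => k.
  exact: (@lower_ae R d T P A mA N2 b g Hb Hg01 Hginc Hgint Hsmall (fun _ => k) k (fun n kn => kn) _ (ep_gt0 R m)).
have H3 : {ae P, forall w, forall m, exists n0, forall n, (n0 <= n)%N ->
     expR (- (ep R m * n%:R)) < A n n w}.
  apply: ae_foralln => m.
  exact: (@lower_ae R d T P A mA N2 b g Hb Hg01 Hginc Hgint Hsmall id 0 (fun n _ => leqnn n) _ (ep_gt0 R m)).
apply: (filterS2 _ _ (filterS2 _ (fun w x y => conj x y) H1 H2) H3) => w [h1 h2] h3.
have A0 : forall k n, 0 <= A k n w by move=> k n; exact: sqrtr_ge0.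
exact: (@det R (fun k n => A k n w) A0 h1 h2 h3).
Qed.
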